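(* With $B_n,P_n$ as in the context, the block lengths $L_n=|B_n|$ grow exponentially in $n$, and the pillar lengths $m_n=|P_n|$ also grow exponentially in $n$.
   Context: Generation operator: for a finite vector $R=\langle r_1,\dots,r_m\rangle$ of positive integers and $s\in\{1,3\}$, $\mathcal{G}(R,s)= s^{r_1}\,(4-s)^{r_2}\,s^{r_3}\cdots$ (the $i$-th run consists of $r_i$ copies of $s$ if $i$ is odd and of $4-s$ if $i$ is even), of length $\sum_i r_i$. For a finite word $W$ over $\{1,3\}$, $R(W)$ denotes $W$ itself regarded as a vector of positive integers. Define $B_1=\mathcal{G}(\langle 1,3,3,3,1\rangle,1)=1\,3\,3\,3\,1\,1\,1\,3\,3\,3\,1$, $P_1=3$, and for $n\ge1$: $B_{n+1}=B_n\,P_n\,B_n$ (concatenation), $P_{n+1}=\mathcal{G}(R(P_n),3)$. ''Grows exponentially'' means bounded below by $C\gamma^n$ for some constants $C>0$, $\gamma>1$. *)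

(* Defs.v *)
From Stdlib Require Import Reals List Arith.
Import ListNotations.
Open Scope R_scope.

(* Generation operator G(R, s): the i-th run consists of r_i copies of s
   (i odd) or of 4 - s (i even). *)
Fixpoint gen (R : list nat) (s : nat) : list nat :=
  match R with
  | nil => nil
  | r :: R' => repeat s r ++ gen R' (4 - s)
  end.

Definition B1 : list nat := gen [1; 3; 3; 3; 1]%nat 1.
Definition P1 : list nat := [3%nat].

(* BP k = (B_{k+1}, P_{k+1}) *)
Fixpoint BP (k : nat) : list nat * list nat :=
  match k with
  | O => (B1, P1)
  | S k' => let (b, p) := BP k' in (b ++ p ++ b, gen p 3)
  end.

Definition B (n : nat) : list nat := fst (BP (n - 1)).
Definition P (n : nat) : list nat := snd (BP (n - 1)).

Definition grows_exponentially (f : nat -> R) : Prop :=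
  exists C gamma : R, 0 < C /\ 1 < gamma /\
    forall n : nat, (1 <= n)%nat -> C * gamma ^ n <= f n.

Lemma B1_check : B1 = [1;3;3;3;1;1;1;3;3;3;1]%nat.
Proof. reflexivity. Qed.

(* Main.v *)
Require Import Defs.
From Stdlib Require Import Reals List.
From Stdlib Require Import Lia Lra Arith.
Import ListNotations.

Fixpoint c3 (w : list nat) : nat :=
  match w with nil => 0%nat | x :: w' => ((if Nat.eqb x 3 then 1 else 0) + c3 w')%nat end.

Fixpoint sumw (w : list nat) : nat :=
  match w with nil => 0%nat | x :: w' => (x + sumw w')%nat end.

Definition rng (x : nat) : Prop := (1 <= x <= 3)%nat.

Lemma c3_app a b : c3 (a ++ b) = (c3 a + c3 b)%nat.
Proof. induction a; simpl; lia. Qed.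

Lemma c3_rep s r : c3 (repeat s r) = (if Nat.eqb s 3 then r else 0)%nat.
Proof. induction r; simpl; destruct (Nat.eqb s 3); lia. Qed.

Lemma len_gen R s : length (gen R s) = sumw R.
Proof. revert s; induction R; intro s; simpl; [reflexivity|].
  rewrite length_app, repeat_length, IHR; reflexivity. Qed.

Lemma gen_rng R s : rng s -> Forall rng (gen R s).
Proof. revert s; induction R; intros s Hs; cbn [gen]; [constructor|].
  apply Forall_app; split.
  - apply Forall_forall; intros x Hx; apply repeat_spec in Hx; rewrite Hx; exact Hs.
  - apply IHR. unfold rng in *. lia. Qed.

Lemma gen_c3 R : Forall rng R ->
  (length (gen R 3) <= 4 * c3 (gen R 3))%nat /\
  (length (gen R 1) <= 4 * c3 (gen R 1) + 3)%nat.
Proof.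
  induction R as [|r R IH]; intros HF; simpl; [lia|].
  inversion HF; subst. destruct (IH H2) as [I1 I2]. unfold rng in H1.
  rewrite !length_app, !c3_app, !c3_rep, !repeat_length. simpl Nat.eqb.
  simpl (4 - 3)%nat; simpl (4-1)%nat. split; lia.
Qed.

Lemma sumw_ge w : Forall rng w -> (length w + 2 * c3 w <= sumw w)%nat.
Proof. induction w as [|x w IH]; intros HF; simpl; [lia|].
  inversion HF; subst. specialize (IH H2). unfold rng in H1.
  destruct (Nat.eqb_spec x 3); lia. Qed.

Lemma BP_S k : BP (S k) = (fst (BP k) ++ snd (BP k) ++ fst (BP k), gen (snd (BP k)) 3).
Proof. simpl. destruct (BP k); reflexivity. Qed.

Lemma P_inv k : Forall rng (snd (BP k)) /\ (length (snd (BP k)) <= 4 * c3 (snd (BP k)))%nat.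
Proof. destruct k.
  - simpl. split; [repeat constructor; unfold rng; lia | simpl; lia].
  - rewrite BP_S; simpl snd. split.
    + apply gen_rng; unfold rng; lia.
    + apply gen_c3. destruct k; [simpl; repeat constructor; unfold rng; lia|].
      rewrite BP_S; simpl snd; apply gen_rng; unfold rng; lia.
Qed.

Lemma P_grow k : (3 * length (snd (BP k)) <= 2 * length (snd (BP (S k))))%nat.
Proof. rewrite BP_S; simpl snd. rewrite len_gen.
  destruct (P_inv k) as [HF H]. pose proof (sumw_ge _ HF). lia. Qed.

Lemma B_grow k : (2 * length (fst (BP k)) <= length (fst (BP (S k))))%nat.
Proof. rewrite BP_S; simpl fst. rewrite !length_app. lia. Qed.

Lemma P_lb k : (3/2)^k <= INR (length (snd (BP k))).
Proof. induction k.
  - simpl. lra.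
  - pose proof (P_grow k) as H. apply le_INR in H. rewrite !mult_INR in H.
    change (3/2 * (3/2)^k <= INR (length (snd (BP (S k))))). replace (INR 3) with 3 in H by (simpl; lra). replace (INR 2) with 2 in H by (simpl; lra). lra.
Qed.

Lemma B_lb k : 2^k <= INR (length (fst (BP k))).
Proof. induction k.
  - simpl. lra.
  - pose proof (B_grow k) as H. apply le_INR in H. rewrite !mult_INR in H.
    change (2 * 2^k <= INR (length (fst (BP (S k))))). replace (INR 2) with 2 in H by (simpl; lra). lra.
Qed.

Theorem proposition5p2 :
  grows_exponentially (fun n => INR (length (B n))) /\
  grows_exponentially (fun n => INR (length (P n))).
Proof.
  split.
  - exists (1/2), 2. split; [lra|split;[lra|]]. intros n Hn.
    unfold B. destruct n; [lia|]. replace (S n - 1)%nat with n by lia.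
    pose proof (B_lb n). simpl pow. lra.
  - exists (2/3), (3/2). split; [lra|split;[lra|]]. intros n Hn.
    unfold P. destruct n; [lia|]. replace (S n - 1)%nat with n by lia.
    pose proof (P_lb n). simpl pow. lra.
Qed.
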